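(* Let $0<\delta<1$, let $r\ge2$ be an integer, and let $G$ be an $(n,d,\lambda)$-graph with $\lambda<\delta d$. Then, with activation threshold $r$, every set of vertices of size larger than $\frac{(r-1)n}{(1-\delta)d}$ is contagious.
   Context: Bootstrap percolation with threshold $r\ge 2$ on a graph $G=(V,E)$: given a set $A_0\subseteq V$ of seeds, define for $i\ge1$ $A_i=A_{i-1}\cup\{v:|N(v)\cap A_{i-1}|\ge r\}$, where $N(v)$ is the set of neighbors of $v$, and $\langle A_0\rangle=\bigcup_i A_i$. The set $A_0$ is contagious if $\langle A_0\rangle=V$. An $(n,d,\lambda)$-graph is a $d$-regular graph on $n$ vertices whose adjacency eigenvalues $d=\lambda_1\ge\lambda_2\ge\dots\ge\lambda_n$ satisfy $\max\{|\lambda_2|,|\lambda_n|\}\le\lambda$. *)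

(* Defs.v *)
From HB Require Import structures.
From mathcomp Require Import all_boot all_order all_algebra.
Set Implicit Arguments. Unset Strict Implicit. Unset Printing Implicit Defensive.
Import Order.TTheory GRing.Theory Num.Theory.
Local Open Scope ring_scope.

Definition simple_graph (n : nat) (e : rel 'I_n) : Prop :=
  (forall u v, e u v = e v u) /\ (forall v, ~~ e v v).

Definition nbhd (n : nat) (e : rel 'I_n) (v : 'I_n) : {set 'I_n} :=
  [set u | e v u].

Definition regular (n : nat) (e : rel 'I_n) (d : nat) : Prop :=
  forall v, #|nbhd e v| = d.

Definition adj_mx (R : nzRingType) (n : nat) (e : rel 'I_n) : 'M[R]_n :=
  \matrix_(i, j) (e i j)%:R.

Definition adj_spectrum (R : rcfType) (n : nat) (e : rel 'I_n) (s : seq R) :=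
  [/\ size s = n, sorted (fun x y : R => y <= x) s &
      char_poly (adj_mx R e) = \prod_(x <- s) ('X - x%:P)].

Definition ndl_graph (R : rcfType) (n d : nat) (lam : R) (e : rel 'I_n) : Prop :=
  [/\ simple_graph e, regular e d &
      exists s : seq R, adj_spectrum e s /\
        (forall i : nat, (1 <= i < n)%N -> `|s`_i| <= lam)].

Definition bp_step (n : nat) (e : rel 'I_n) (r : nat) (A : {set 'I_n}) : {set 'I_n} :=
  A :|: [set v | (r <= #|nbhd e v :&: A|)%N].

Definition bp_iter (n : nat) (e : rel 'I_n) (r : nat) (A0 : {set 'I_n}) (i : nat) :=
  iter i (bp_step e r) A0.

Definition in_span (n : nat) (e : rel 'I_n) (r : nat) (A0 : {set 'I_n}) (v : 'I_n) : Prop :=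
  exists i : nat, v \in bp_iter e r A0 i.

Definition contagious (n : nat) (e : rel 'I_n) (r : nat) (A0 : {set 'I_n}) : Prop :=
  forall v : 'I_n, in_span e r A0 v.

(* Main.v *)
Require Import Defs.
From HB Require Import structures.
From mathcomp Require Import all_boot all_order all_algebra.
From mathcomp Require Import sesquilinear spectral complex.
From mathcomp Require Import ring lra zify.
Import Order.TTheory GRing.Theory Num.Theory.
Local Open Scope ring_scope.

Lemma char_poly_similar (F : fieldType) n (P B : 'M[F]_n) :
  P \in unitmx -> char_poly (invmx P *m B *m P) = char_poly B.
Proof.
move=> Pu.
rewrite /char_poly.
have -> : char_poly_mx (invmx P *m B *m P) =
   map_mx polyC (invmx P) *m char_poly_mx B *m map_mx polyC P.
  rewrite /char_poly_mx mulmxBr mulmxBl -!map_mxM.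
  by rewrite mul_mx_scalar -scalemxAl -map_mxM mulVmx // map_mx1 scalemx1.
rewrite !det_mulmx mulrC mulrA -det_mulmx -map_mxM mulmxV // map_mx1 det1 mul1r. done.
Qed.

Lemma count_le1 (R : realDomainType) (s : seq R) (lam : R) :
  (forall i, (1 <= i < size s)%N -> s`_i <= lam) ->
  (count (fun t : R => (lam < t)%R) s <= 1)%N.
Proof.
case: s => [|a s] //= H.
suff -> : count (fun t : R => (lam < t)%R) s = 0%N by case: (lam < a).
apply/eqP; rewrite -leqn0 leqNgt -has_count; apply/hasP => -[t ts].
have [i ilt <-] := nthP 0 ts.
by have := H i.+1; rewrite /= ltnS ilt => /(_ isT); rewrite leNgt => /negbTE ->.
Qed.
Lemma count_card (T : finType) (p : pred T) : count p (enum T) = #|p|.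
Proof. by rewrite cardE -size_filter /enum_mem -filter_predI; congr size; apply: eq_filter => x /=; rewrite andbT. Qed.
Lemma card2 (T : finType) (p : pred T) k k' : k != k' -> p k -> p k' -> (2 <= #|p|)%N.
Proof.
move=> kk pk pk'. rewrite (cardD1 k) (cardD1 k') !inE eq_sym kk /= unfold_in pk unfold_in pk'.
by [].
Qed.

Section Spec.
Variables (R : rcfType) (n : nat) (e : rel 'I_n) (d : nat) (lam : R) (s : seq R).
Hypothesis esym : forall u v, e u v = e v u.
Hypothesis reg : forall v, #|nbhd e v| = d.
Hypothesis hs : adj_spectrum e s.
Hypothesis hsl : forall i, (1 <= i < n)%N -> `|s`_i| <= lam.
Hypothesis hld : lam < d%:R.

Local Notation C := (R[i]).
Local Notation cR := (real_complex R).
Let A : 'M[C]_n := adj_mx C e.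

Lemma A_herm : A \is hermsymmx.
Proof.
apply/is_hermitianmxP; rewrite expr0 scale1r; apply/matrixP => i j.
by rewrite !mxE esym conjC_nat.
Qed.

Let P := spectralmx A.
Let D := spectral_diag A.
Lemma Pdec : A = invmx P *m diag_mx D *m P.
Proof. by apply/orthomx_spectralP/hermitian_normalmx/A_herm. Qed.
Lemma Punit : P \is unitarymx. Proof. exact: spectral_unitarymx. Qed.
Lemma invP : invmx P = P^t*%sesqui.
Proof. exact: invmx_unitary Punit. Qed.
Lemma Dreal k : D 0 k \is Num.real.
Proof. by have /mxOverP := hermitian_spectral_diag_real A_herm; apply. Qed.

Lemma charA : char_poly A = \prod_(k < n) ('X - (D 0 k)%:P).
Proof.
rewrite Pdec char_poly_similar ?spectral_unit // char_poly_trig ?diag_mx_is_trig //.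
by apply: eq_bigr => k _; rewrite mxE eqxx mulr1n.
Qed.

Lemma charA' : char_poly A = \prod_(t <- map cR s) ('X - t%:P).
Proof.
rewrite prod_map_poly.
have [_ _ <-] := hs.
rewrite map_char_poly; congr char_poly; apply/matrixP => i j.
by rewrite !mxE rmorph_nat.
Qed.


Lemma two_big k k' : k != k' -> cR lam < D 0 k -> cR lam < D 0 k' -> False.
Proof.
move=> kk hk hk'.
have hperm : perm_eq [seq D 0 k | k <- enum 'I_n] (map cR s).
  apply: prod_XsubC_eq; rewrite big_map big_enum /= -charA' charA.
  by apply: eq_bigl => i; rewrite inE.
have := (permP hperm) (fun t : C => cR lam < t).
rewrite count_map (count_map cR).
have -> : count (preim cR (fun t : C => cR lam < t)) s = count (fun t : R => (lam < t)%R) s.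
  by apply: eq_count => t /=; rewrite ltcR.
have [hsz _ _] := hs.
set p := preim _ _.
have H3 : (2 <= #|p|)%N by apply: (@card2 _ p k k' kk).
rewrite count_card => H2.
have H4 : (count (fun t : R => (lam < t)%R) s <= 1)%N.
  apply: count_le1 => i; rewrite hsz => /hsl; apply: le_trans.
  exact: real_ler_norm (num_real _).
by move: H3; rewrite H2 => H3; have := leq_trans H3 H4.
Qed.

Lemma tCmul m p q (M : 'M[C]_(m, p)) (N : 'M[C]_(p, q)) :
  ((M *m N)^t* = N^t* *m M^t*)%sesqui.
Proof. by rewrite trmx_mul map_mxM. Qed.

Lemma PtP : (P^t* *m P)%sesqui = 1%:M.
Proof. by rewrite -invP mulVmx // spectral_unit. Qed.

Lemma inner_pres m p (u : 'M[C]_(m, n)) (v : 'M[C]_(p, n)) :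
  ((u *m P^t*) *m (v *m P^t*)^t* = u *m v^t*)%sesqui.
Proof. by rewrite tCmul trmxCK mulmxA -(mulmxA u) PtP mulmx1. Qed.

Lemma Qid (u : 'rV[C]_n) :
  (u *m A *m u^t* = (u *m P^t*) *m diag_mx D *m (u *m P^t*)^t*)%sesqui.
Proof. by rewrite tCmul trmxCK {1}Pdec invP !mulmxA. Qed.

Let one : 'rV[C]_n := const_mx 1.

Lemma oneA : one *m A = d%:R *: one.
Proof.
apply/matrixP => i j; rewrite !mxE.
under eq_bigr do rewrite !mxE mul1r esym.
rewrite mulr1 -(reg j) -sum1_card natr_sum [RHS]big_mkcond /=.
by apply: eq_bigr => k _; rewrite /nbhd inE; case: (e j k).
Qed.

Let z := (one *m P^t*)%sesqui.

Lemma zD : z *m diag_mx D = d%:R *: z.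
Proof.
have -> : z *m diag_mx D = one *m (A *m P^t*)%sesqui.
  by rewrite Pdec invP /z !mulmxA mulmxtVK // Punit.
by rewrite mulmxA oneA -scalemxAl.
Qed.

Lemma zz : ((z *m z^t*) 0 0 = n%:R)%sesqui.
Proof.
rewrite /z inner_pres !mxE.
rewrite (eq_bigr (fun _ => 1)); last by move=> i _; rewrite !mxE conjC1 mulr1.
by rewrite sumr_const card_ord.
Qed.


Lemma dotE (u v : 'rV[C]_n) : ((u *m v^t*) 0 0 = \sum_j u 0 j * (v 0 j)^*)%sesqui.
Proof. by rewrite mxE; apply: eq_bigr => j _; rewrite !mxE. Qed.

Lemma lamd : cR lam < d%:R.
Proof. by rewrite -(rmorph_nat cR) ltcR. Qed.

Lemma zeroz k k' : k != k' -> cR lam < D 0 k -> z 0 k' = 0.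
Proof.
move=> kk hk.
have hk' : D 0 k' <= cR lam.
  rewrite real_leNgt ?Dreal //; last by apply/complex_realP; exists lam.
  apply/negP => h. exact: (two_big _ _ kk hk h).
have := zD; rewrite mul_mx_diag => /matrixP/(_ 0 k'); rewrite mxE [in RHS]mxE.
move=> /eqP; rewrite mulrC -subr_eq0 -mulrBl mulf_eq0 => /orP[|/eqP //].
rewrite subr_eq0 => /eqP hD.
by move: hk'; rewrite hD => /(lt_le_trans lamd); rewrite ltxx.
Qed.

Lemma ykz (x : 'I_n -> R) k : \sum_i x i = 0 -> cR lam < D 0 k ->
  ((\row_i cR (x i)) *m P^t*)%sesqui 0 k = 0.
Proof.
move=> hx hk.
set y := (_ *m _)%sesqui.
have hyz : ((y *m z^t*) 0 0 = 0)%sesqui.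
  rewrite /y /z inner_pres !mxE.
  under eq_bigr do rewrite !mxE conjC1 mulr1.
  by rewrite -rmorph_sum hx rmorph0.
have hzz := zz.
rewrite dotE (bigD1 k) //= big1 ?addr0 in hyz; last first.
  by move=> j jk; rewrite (@zeroz k j _ hk) ?conjC0 ?mulr0 // eq_sym.
rewrite dotE (bigD1 k) //= big1 ?addr0 in hzz; last first.
  by move=> j jk; rewrite (@zeroz k j _ hk) ?conjC0 ?mulr0 // eq_sym.
move: hyz => /eqP; rewrite mulf_eq0 => /orP[/eqP //|].
rewrite conjC_eq0 => /eqP hz0; move: hzz; rewrite hz0 mul0r => /eqP.
rewrite eq_sym pnatr_eq0 => hn; suff : (0 < n)%N by rewrite lt0n hn.
exact: leq_ltn_trans (leq0n _) (ltn_ord k).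
Qed.


Lemma cR_real (r : R) : cR r \is Num.real.
Proof. by apply/complex_realP; exists r. Qed.

Lemma spec_ineq (x : 'I_n -> R) : \sum_i x i = 0 ->
  \sum_j (\sum_i x i * (e i j)%:R) * x j <= lam * \sum_j x j * x j.
Proof.
move=> hx.
set xr : 'rV[C]_n := \row_i cR (x i).
rewrite -lecR.
have -> : cR (\sum_j (\sum_i x i * (e i j)%:R) * x j) = ((xr *m A) *m xr^t*)%sesqui 0 0.
  rewrite dotE rmorph_sum; apply: eq_bigr => j _.
  rewrite rmorphM rmorph_sum !mxE conj_Creal ?cR_real //; congr (_ * _).
  by apply: eq_bigr => i _; rewrite rmorphM rmorph_nat !mxE.
have -> : cR (lam * \sum_j x j * x j) = cR lam * (xr *m xr^t*)%sesqui 0 0.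
  rewrite dotE rmorphM rmorph_sum; congr (_ * _); apply: eq_bigr => j _.
  by rewrite rmorphM !mxE conj_Creal ?cR_real.
rewrite Qid -inner_pres dotE dotE mulr_sumr; apply: ler_sum => j _.
rewrite mul_mx_diag mxE.
set y := (xr *m _)%sesqui.
have [hle|hlt] := real_leP (Dreal j) (cR_real lam).
  by rewrite mulrAC [X in _ <= X]mulrC ler_wpM2l // mul_conjC_ge0.
by rewrite (@ykz x j hx hlt) !mul0r mulr0.
Qed.

End Spec.

Lemma sumb (R : nzRingType) (T : finType) (p : pred T) :
  \sum_(i : T) ((p i : nat)%:R : R) = #|p|%:R.
Proof.
rewrite -sum1_card natr_sum [RHS]big_mkcond /=.
by apply: eq_bigr => i _; rewrite unfold_in; case: (p i).
Qed.

Lemma sumbS (R : nzRingType) (T : finType) (A : {set T}) :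
  \sum_(i : T) (((i \in A) : nat)%:R : R) = #|A|%:R.
Proof.
rewrite -sum1_card natr_sum [RHS]big_mkcond /=.
by apply: eq_bigr => i _; case: (i \in A).
Qed.

Section Comb.
Variables (R : rcfType) (n : nat) (e : rel 'I_n) (d : nat) (S : {set 'I_n}).
Hypothesis esym : forall u v, e u v = e v u.
Hypothesis reg : forall v, #|nbhd e v| = d.
Let B := ~: S.
Let x (i : 'I_n) : R := n%:R * (i \in B)%:R - #|B|%:R.
Let E := (\sum_(j in B) #|nbhd e j :&: S|)%N.

Lemma colsum j : \sum_i ((e i j)%:R : R) = d%:R.
Proof.
rewrite -(reg j) -sumbS; apply: eq_bigr => i _; by rewrite esym /nbhd inE.
Qed.
Lemma rowsum i : \sum_j ((e i j)%:R : R) = d%:R.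
Proof. by rewrite -(reg i) -sumbS; apply: eq_bigr => j _; rewrite /nbhd inE. Qed.

Lemma sumx : \sum_i x i = 0.
Proof.
rewrite /x sumrB -mulr_sumr sumbS sumr_const card_ord. rewrite -mulr_natr; ring.
Qed.

Lemma sumu : \sum_i (((i \in B) : nat)%:R : R) = #|B|%:R.
Proof. by rewrite sumbS. Qed.

Lemma sumx2 : \sum_j x j * x j = n%:R ^+ 2 * #|B|%:R - n%:R * #|B|%:R ^+ 2.
Proof.
have h j : x j * x j = n%:R ^+ 2 * ((j \in B) : nat)%:R
    - 2%:R * n%:R * #|B|%:R * ((j \in B) : nat)%:R + #|B|%:R ^+ 2.
  rewrite /x; case: (j \in B) => /=; ring.
rewrite (eq_bigr _ (fun j _ => h j)) !big_split /=. rewrite sumrN -!mulr_sumr sumu sumr_const card_ord -mulr_natr; ring.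
Qed.

Lemma cj j : \sum_i (((i \in B) : nat)%:R : R) * (e i j)%:R = #|nbhd e j :&: B|%:R.
Proof.
rewrite -sumbS; apply: eq_bigr => i _; rewrite -natrM mulnb /nbhd !inE esym andbC.
by [].
Qed.

Lemma cjB j : j \in B -> #|nbhd e j :&: B| = (d - #|nbhd e j :&: S|)%N.
Proof.
move=> _; rewrite -(reg j) -(cardsID S (nbhd e j)) addKn /B setDE.
by [].
Qed.


Let c j : R := #|nbhd e j :&: B|%:R.
Let u j : R := ((j \in B) : nat)%:R.

Lemma sumcu : \sum_j c j * u j = d%:R * #|B|%:R - E%:R.
Proof.
rewrite (eq_bigr (fun j => if j \in B then c j else 0)); last first.
  by move=> j _; rewrite /u; case: (j \in B); rewrite ?mulr1 ?mulr0.
rewrite -big_mkcond /=.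
rewrite (eq_bigr (fun j => d%:R - (#|nbhd e j :&: S|)%:R)); last first.
  move=> j jB; rewrite /c cjB // natrB // -(reg j).
  by apply: subset_leq_card; apply: subsetIl.
by rewrite sumrB sumr_const /E natr_sum mulr_natr.
Qed.

Lemma sumc : \sum_j c j = #|B|%:R * d%:R.
Proof.
rewrite (eq_bigr (fun j => \sum_i u i * (e i j)%:R)); last by move=> j _; rewrite cj.
rewrite exchange_big /=.
under eq_bigr do rewrite -mulr_sumr rowsum.
by rewrite -mulr_suml sumu.
Qed.

Lemma sumQ : \sum_j (\sum_i x i * (e i j)%:R) * x j =
  n%:R ^+ 2 * (d%:R * #|B|%:R - E%:R) - n%:R * d%:R * #|B|%:R ^+ 2.
Proof.
have hin j : \sum_i x i * (e i j)%:R = n%:R * c j - #|B|%:R * d%:R.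
  rewrite /x.
  under eq_bigr do rewrite mulrBl -mulrA.
  by rewrite sumrB -mulr_sumr -mulr_sumr cj colsum.
under eq_bigr do rewrite hin.
have h j : (n%:R * c j - #|B|%:R * d%:R) * x j =
   n%:R ^+ 2 * (c j * u j) - n%:R * #|B|%:R * c j
   - n%:R * #|B|%:R * d%:R * u j + #|B|%:R ^+ 2 * d%:R.
  by rewrite /x /u; ring.
rewrite (eq_bigr _ (fun j _ => h j)) !big_split /= !sumrN -!mulr_sumr.
rewrite sumcu sumc sumu sumr_const card_ord -mulr_natr; ring.
Qed.

Lemma Ebound r : (forall j, j \in B -> #|nbhd e j :&: S| < r)%N ->
  (E <= #|B| * r.-1)%N.
Proof.
move=> h; rewrite /E -sum_nat_const; apply: leq_sum => j jB.
by rewrite -ltnS; case: r h => [|r] h; [have := h j jB | rewrite prednK //; exact: h].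
Qed.

End Comb.

Lemma key (R : rcfType) n (e : rel 'I_n) (d : nat) (lam : R) (s : seq R) (S : {set 'I_n}) :
  (forall u v, e u v = e v u) -> (forall v, #|nbhd e v| = d) -> adj_spectrum e s ->
  (forall i, (1 <= i < n)%N -> `|s`_i| <= lam) -> lam < d%:R ->
  (d%:R - lam) * #|~: S|%:R * #|S|%:R <=
     n%:R * (\sum_(j in ~: S) #|nbhd e j :&: S|)%N%:R.
Proof.
move=> esym reg hs hsl hld.
have := @spec_ineq R n e d lam s esym reg hs hsl hld _ (sumx R n S).
rewrite (sumQ R n e d S esym reg) sumx2.
set E := (\sum_(j in ~: S) _)%N.
have hn : n%:R = #|~: S|%:R + #|S|%:R :> R.
  by rewrite -natrD addnC cardsC card_ord.
rewrite hn; set b := #|~: S|%:R; set t := #|S|%:R; set ER := E%:R.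
move=> H.
have hb : 0 <= b by rewrite /b ler0n.
have ht : 0 <= t by rewrite /t ler0n.
have Hid : (b + t) * ((b + t) * ER - (d%:R - lam) * b * t) =
   lam * ((b + t) ^+ 2 * b - (b + t) * b ^+ 2) -
   ((b + t) ^+ 2 * (d%:R * b - ER) - (b + t) * d%:R * b ^+ 2) by ring.
have H0 : 0 <= (b + t) * ((b + t) * ER - (d%:R - lam) * b * t) by rewrite Hid subr_ge0.
have [hbt|hbt] := eqVneq (b + t) 0.
  have hb0 : b = 0 by lra.
  have ht0 : t = 0 by lra.
  by rewrite hb0 ht0 addr0 !(mulr0, mul0r).
have hbtp : 0 < b + t by rewrite lt_def hbt addr_ge0.
by move: H0; rewrite pmulr_rge0 // subr_ge0.
Qed.

Lemma stab (T : finType) (f : {set T} -> {set T}) (A : {set T}) :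
  (forall X : {set T}, X \subset f X) -> iter #|T|.+1 f A = iter #|T| f A.
Proof.
move=> hf; set N := #|T|.
apply/eqP; apply: contraT => hne.
have hall k : (k <= N)%N -> iter k.+1 f A != iter k f A.
  move=> hk; apply: contra hne => /eqP hk'.
  have hj j : iter (k + j).+1 f A = iter (k + j) f A.
    elim: j => [|j IH]; first by rewrite addn0.
    by rewrite addnS [LHS]iterS IH.
  by rewrite -(subnKC hk) hj.
have hcard k : (k <= N.+1)%N -> (k <= #|iter k f A|)%N.
  elim: k => // k IH hk.
  have hp : iter k f A \proper iter k.+1 f A.
    by rewrite properEneq eq_sym hall // iterS hf.
  exact: leq_ltn_trans (IH (ltnW hk)) (proper_card hp).
have := hcard N.+1 (leqnn _).
by rewrite ltnNge max_card.
Qed.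

Lemma iter_sub n (e : rel 'I_n) r (A0 : {set 'I_n}) k : A0 \subset bp_iter e r A0 k.
Proof.
elim: k => [|k IH] //=; apply: subset_trans IH _; exact: subsetUl.
Qed.

Theorem lemma7 (R : rcfType) (n d r : nat) (lam delta : R) (e : rel 'I_n)
  (hdelta0 : 0 < delta) (hdelta1 : delta < 1) (hr : (2 <= r)%N)
  (hG : ndl_graph d lam e) (hlam : lam < delta * d%:R)
  (A0 : {set 'I_n})
  (hA : (r.-1)%:R * n%:R / ((1 - delta) * d%:R) < #|A0|%:R) :
  contagious e r A0.
Proof.
move: hG => [[esym irr] reg [s [hs hsl]]].
move=> v.
have [d0|dpos] := eqVneq d 0%N.
  move: hlam hA; rewrite d0 mulr0n !mulr0 invr0 mulr0 => hlam hA.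
  have [n1|n2] := leqP n 1%N.
    have : (0 < #|A0|)%N by rewrite -(ltr0n R).
    rewrite card_gt0 => /set0Pn [w wA].
    exists 0%N => /=.
    suff -> : v = w by [].
    apply: ord_inj; have := ltn_ord v; have := ltn_ord w; lia.
  have := hsl 1%N; rewrite n2 => /(_ isT) h.
  by have := le_lt_trans (le_trans (normr_ge0 _) h) hlam; rewrite ltxx.
have dposR : 0 < d%:R :> R by rewrite ltr0n lt0n.
have hld : lam < d%:R.
  by apply: lt_le_trans hlam _; rewrite ger_pMl // ltW.
set S := bp_iter e r A0 n.
have hfix : bp_step e r S = S.
  by have := @stab _ (bp_step e r) A0 (fun X => subsetUl _ _); rewrite card_ord.
have [vS|vS] := boolP (v \in S); first by exists n.
exfalso.
have hcl : forall j, j \in ~: S -> (#|nbhd e j :&: S| < r)%N.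
  move=> j; rewrite inE; apply: contraNT; rewrite -leqNgt => h.
  by rewrite -hfix /bp_step inE inE h orbT.
have hE := @Ebound n e S r hcl.
have hk := @key R n e d lam s S esym reg hs hsl hld.
have hb : (0 < #|~: S|)%N by rewrite card_gt0; apply/set0Pn; exists v; rewrite inE.
have hat : (#|A0| <= #|S|)%N by apply: subset_leq_card; apply: iter_sub.
set b := #|~: S| in hb hE hk.
set t := #|S| in hat hk.
set E := (\sum_(j in ~: S) _)%N in hE hk.
have hbR : 0 < b%:R :> R by rewrite ltr0n.
have hE' : (E%:R : R) <= b%:R * (r.-1)%:R by rewrite -natrM ler_nat.
have h1 : (d%:R - lam) * t%:R <= n%:R * (r.-1)%:R.
  have := le_trans hk (ler_wpM2l (ler0n _ _) hE').
  by rewrite [X in X <= _]mulrAC [X in _ <= X]mulrCA [X in _ <= X]mulrC ler_pM2r.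
set q := (1 - delta) * d%:R.
have qpos : 0 < q by rewrite /q mulr_gt0 // subr_gt0.
move: hA; rewrite ltr_pdivrMr // => hA.
have hdq : q < d%:R - lam by rewrite /q; lra.
have haR : (#|A0|%:R : R) <= t%:R by rewrite ler_nat.
have ha0 : 0 <= (#|A0|%:R : R) by rewrite ler0n.
have h2 : #|A0|%:R * q <= t%:R * q by rewrite ler_wpM2r // ltW.
have h3 : t%:R * q <= t%:R * (d%:R - lam) by rewrite ler_wpM2l // ?ler0n // ltW.
have h4 : t%:R * (d%:R - lam) <= (r.-1)%:R * n%:R by rewrite mulrC (mulrC (r.-1)%:R).
have := lt_le_trans hA (le_trans h2 (le_trans h3 h4)).
by rewrite ltxx.
Qed.
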